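(* Let $G$ be a layered ADT network with source $S$ in layer $1$, in which every supernode has exactly $n$ input ports and $n$ output ports. Let $R=\min_{T\in\mathcal T}\mathrm{mincut}(S,T)$. Let $1\le l\le\lambda-1$, and let $W'$ be a regular set consisting of $R$ input ports of supernodes at layer $l+1$. Then there is a regular set $W$ consisting of $R$ output ports of supernodes at layer $l$ such that the $R\times R$ incidence matrix $G_{(W,W')}$ is full rank.
   Context: Layered ADT network. $G$ is a directed acyclic network of supernodes arranged in layers $1,\dots,\lambda$. All links go from output ports of supernodes at layer $l$ to input ports of supernodes at layer $l+1$, and the source $S$ is at layer $1$. Each supernode $V$ has $n$ input ports and $n$ output ports, and symbols lie in a finite field $\mathbb F_q$. An output port sends the same symbol on all its outgoing edges, and an input port receives the $\mathbb F_q$-sum of its incoming symbols. For supernodes $S,T$, $\mathrm{mincut}(S,T)=\min_\Omega\mathrm{rank}(G_\Omega)$, with the minimum over partitions $\Omega\cup\Omega^c$ of the supernodes with $S\in\Omega$ and $T\in\Omega^c$. $G_\Omega$ is the $0$-$1$ incidence matrix of the edges from output ports in $\Omega$ to input ports in $\Omega^c$. $\mathcal T$ is the set of destination supernodes and $R=\min_{T\in\mathcal T}\mathrm{mincut}(S,T)$. Virtual sink and regular sets. Let $W$ be a set of $R$ ports of supernodes in a single layer such that, for each supernode $V$, $W$ contains either a subset of $O(V)$, or a subset of $I(V)$, or no ports of $V$. The virtual sink $T(W)$ is a new supernode, attached as follows. - Each output port in $W$ is connected by one edge to a distinct input port of $T(W)$. - If $W$ contains $p$ input ports of a supernode $V$,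 all input ports of $V$ not in $W$ are disconnected, and the $p$ upper (first) output ports of $V$ are each connected to a distinct input port of $T(W)$. $W$ is called regular if $\mathrm{mincut}(S,T(W))=R$ in the resulting network. For a set $W$ of $R$ output ports at layer $l$ and a set $W'$ of $R$ input ports at layer $l+1$, $G_{(W,W')}$ is the $R\times R$ $0$-$1$ matrix whose $(w',w)$ entry is $1$ iff there is an edge from $w$ to $w'$. Full rank is taken over $\mathbb F_q$. *)

(* Defs.v *)
From HB Require Import structures.
From mathcomp Require Import all_boot all_order all_algebra.
Set Implicit Arguments. Unset Strict Implicit. Unset Printing Implicit Defensive.
Import GRing.Theory.
Local Open Scope ring_scope.

(* A port network: supernodes [V], output ports [Po] (owner [oo]),
   input ports [Pi] (owner [oi]), and edges [e p q] from output port [p]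
   to input port [q]. *)

(* G_Omega : 0-1 incidence matrix of the edges from output ports in Omega
   to input ports in Omega^c  (rows = input ports, columns = output ports;
   rows/columns of ports not concerned are zero, which does not change the rank). *)
Definition cut_matrix (F : fieldType) (V Po Pi : finType) (oo : Po -> V)
  (oi : Pi -> V) (e : Po -> Pi -> bool) (Om : {set V})
  : 'M[F]_(#|{: Pi}|, #|{: Po}|) :=
  \matrix_(i < #|{: Pi}|, j < #|{: Po}|)
     (if [&& oo (enum_val j) \in Om, oi (enum_val i) \notin Om
           & e (enum_val j) (enum_val i)] then 1 else 0).

Definition cut_rank (F : fieldType) (V Po Pi : finType) (oo : Po -> V)
  (oi : Pi -> V) (e : Po -> Pi -> bool) (Om : {set V}) : nat :=
  \rank (cut_matrix F oo oi e Om).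

(* mincut(s,t) = min over Omega with s in Omega, t notin Omega of rank G_Omega.
   (The neutral element #|Pi| is an upper bound of every cut rank.) *)
Definition mincut (F : fieldType) (V Po Pi : finType) (oo : Po -> V)
  (oi : Pi -> V) (e : Po -> Pi -> bool) (s t : V) : nat :=
  \big[minn/#|{: Pi}|]_(Om : {set V} | (s \in Om) && (t \notin Om))
     cut_rank F oo oi e Om.

(* A port of a supernode: [inl (v,i)] = i-th output port of v,
   [inr (v,i)] = i-th input port of v (index 0 = upper/first port). *)
Definition port (V : finType) (n : nat) := ((V * 'I_n) + (V * 'I_n))%type.

Definition port_owner (V : finType) (n : nat) (p : port V n) : V :=
  match p with inl a => a.1 | inr a => a.1 end.

Definition is_out (V : finType) (n : nat) (p : port V n) : bool :=
  if p is inl _ then true else false.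
Definition is_in (V : finType) (n : nat) (p : port V n) : bool :=
  if p is inr _ then true else false.

Definition pedge (V : finType) (n : nat) (edge : V * 'I_n -> V * 'I_n -> bool)
  (a b : port V n) : bool :=
  match a, b with inl p, inr q => edge p q | _, _ => false end.

Definition net_mincut (F : fieldType) (V : finType) (n : nat)
  (edge : V * 'I_n -> V * 'I_n -> bool) (s t : V) : nat :=
  mincut F (@fst V 'I_n) (@fst V 'I_n) edge s t.

Definition net_R (F : fieldType) (V : finType) (n : nat)
  (edge : V * 'I_n -> V * 'I_n -> bool) (S : V) (Tset : {set V}) : nat :=
  \big[minn/#|{: V * 'I_n}|]_(T in Tset) net_mincut F edge S T.

(* Input ports of the augmented network: the old input ports, plus one input
   port of the virtual sink for each element of W. The virtual sink is the
   supernode [None]; the old supernodes are [Some v]. *)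
Definition aug_in (V : finType) (n : nat) (W : {set port V n}) :=
  ((V * 'I_n) + {w : port V n | w \in W})%type.

Definition aug_owner_in (V : finType) (n : nat) (W : {set port V n})
  (q : aug_in W) : option V :=
  match q with inl a => Some a.1 | inr _ => None end.

Definition aug_owner_out (V : finType) (n : nat) (p : V * 'I_n) : option V :=
  Some p.1.

Definition disconnected (V : finType) (n : nat) (W : {set port V n})
  (q : V * 'I_n) : bool :=
  [exists j : 'I_n, inr (q.1, j) \in W] && (inr q \notin W).

(* rank of input port q among the input ports of its supernode lying in W:
   the k-th such input port (k = 0,1,..,p-1) is paired with the k-th upper
   output port of the supernode. *)
Definition in_rank (V : finType) (n : nat) (W : {set port V n})
  (q : V * 'I_n) : nat :=
  #|[set j : 'I_n | (inr (q.1, j) \in W) && (j < q.2)%N]|.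

Definition aug_edge (V : finType) (n : nat) (edge : V * 'I_n -> V * 'I_n -> bool)
  (W : {set port V n}) (p : V * 'I_n) (q : aug_in W) : bool :=
  match q with
  | inl q' => edge p q' && ~~ disconnected W q'
  | inr w =>
      match val w with
      | inl p' => p == p'
      | inr q' => (p.1 == q'.1) && (nat_of_ord p.2 == in_rank W q')
      end
  end.

Definition sink_mincut (F : fieldType) (V : finType) (n : nat)
  (edge : V * 'I_n -> V * 'I_n -> bool) (W : {set port V n}) (S : V) : nat :=
  mincut F (@aug_owner_out V n) (@aug_owner_in V n W) (@aug_edge V n edge W)
    (Some S) None.

Definition sink_set (V : finType) (n : nat) (layer : V -> nat) (R : nat)
  (W : {set port V n}) : Prop :=
  [/\ #|W| = R,
      exists k, forall w, w \in W -> layer (port_owner w) = k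
    & forall v : V, ~ ((exists i, inl (v, i) \in W) /\ (exists j, inr (v, j) \in W))].

Definition regular (F : fieldType) (V : finType) (n : nat) (layer : V -> nat)
  (edge : V * 'I_n -> V * 'I_n -> bool) (S : V) (R : nat) (W : {set port V n})
  : Prop :=
  sink_set layer R W /\ sink_mincut F edge W S = R.

Definition GWW (F : fieldType) (V : finType) (n : nat)
  (edge : V * 'I_n -> V * 'I_n -> bool) (W W' : {set port V n})
  : 'M[F]_(#|W'|, #|W|) :=
  \matrix_(i < #|W'|, j < #|W|)
     (if pedge edge (enum_val j) (enum_val i) then 1 else 0).

(* Main.v *)
Require Import Defs.
From HB Require Import structures.
From mathcomp Require Import all_boot all_order all_algebra.
From mathcomp Require Import zify.
Set Implicit Arguments. Unset Strict Implicit. Unset Printing Implicit Defensive.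
Import GRing.Theory.

Ltac bcase xD := let z := fresh "z" in apply/setP => z; rewrite !inE;
  match goal with xX : is_true (?x \notin _) |- _ =>
  let nzx := fresh "nzx" in
  case: (eqVneq z x) => [->|nzx]; [rewrite ?eqxx ?xD ?(negbTE xX) /= | rewrite ?(negbTE nzx) /=] end;
  repeat match goal with |- context [?a \in ?B] => case: (a \in B) end.

Section Mat.
Variable T : finType.
Implicit Types X Y Z D : {set T}.

Definition rankfun (r : {set T} -> nat) : Prop :=
  [/\ r set0 = 0%N,
      (forall X Y, X \subset Y -> r X <= r Y),
      (forall X x, r (x |: X) <= (r X).+1) &
      (forall X Y, r (X :|: Y) + r (X :&: Y) <= r X + r Y)].

Lemma rankfun_le1 r x : rankfun r -> r [set x] <= 1.
Proof. by case=> r0 _ ru _; have := ru set0 x; rewrite setU0 r0. Qed.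

Lemma rankfun_loop r x X : rankfun r -> r [set x] = 0%N -> r (x |: X) <= r X.
Proof.
case=> r0 rm _ rs => h; have := rs [set x] X; rewrite h.
have := rm set0 ([set x] :&: X) (sub0set _); rewrite r0; lia.
Qed.

Lemma subUset_XY X Y Z : X \subset Z -> Y \subset Z -> X :|: Y \subset Z.
Proof. by move=> h1 h2; rewrite subUset h1 h2. Qed.

Definition contr (r : {set T} -> nat) x := fun Z => (r (x |: Z)).-1.

Lemma rankfun_contr r x : rankfun r -> r [set x] = 1%N -> rankfun (contr r x).
Proof.
move=> [r0 rm ru rs] h1; rewrite /contr.
have ge1 Z : 1 <= r (x |: Z) by rewrite -h1; apply: rm; rewrite sub1set setU11.
split.
- by rewrite setU0 h1.
- move=> X Y sXY; have := rm (x |: X) (x |: Y) (setUS _ sXY); have := ge1 X; lia.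
- move=> X y; rewrite setUCA; have := ru (x |: X) y; have := ge1 X; lia.
- move=> X Y; have := rs (x |: X) (x |: Y).
  rewrite -setUUr -setUIr; have := ge1 X; have := ge1 Y; have := ge1 (X :|: Y);
  have := ge1 (X :&: Y); lia.
Qed.

Theorem edmonds (r1 r2 : {set T} -> nat) (k : nat) D :
  rankfun r1 -> rankfun r2 ->
  (forall X, X \subset D -> k <= r1 X + r2 (D :\: X)) ->
  exists W : {set T}, [/\ W \subset D, k <= #|W|, r1 W = #|W| & r2 W = #|W|].
Proof.
move: {2}#|D| (leqnn #|D|) => N.
elim: N r1 r2 k D => [|N IH] r1 r2 k D hD hr1 hr2 H.
  exists set0; rewrite cards0; split => //; try by case: hr1; case: hr2.
  - exact: sub0set.
  - move: hD; rewrite leqn0 cards_eq0 => /eqP D0.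
    by have := H set0 (sub0set _); rewrite D0 setD0; case: hr1 => ->; case: hr2 => ->.
case: k H => [|k] H.
  by exists set0; rewrite cards0 sub0set; split => //; [case: hr1 | case: hr2].
have [D0|[x xD]] := set_0Vmem D.
  by have := H set0 (sub0set _); rewrite D0 setD0; case: hr1 => ->; case: hr2 => ->.
have hD' : #|D :\ x| <= N by move: hD; rewrite (cardsD1 x D) xD; lia.
have eD X : X \subset D :\ x -> D :\: X = x |: ((D :\ x) :\: X).
  move=> sX; apply/setP => z; rewrite !inE.
  case: (eqVneq z x) => [->|nzx] /=; last by [].
  by rewrite xD andbT; apply/negP => /(subsetP sX); rewrite !inE eqxx.
have eD2 X : D :\: (x |: X) = (D :\ x) :\: X.
  by apply/setP => z; rewrite !inE; case: (z == x); case: (z \in X); case: (z \in D).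
have sXD X : X \subset D :\ x -> x |: X \subset D.
  move=> sX; apply/subsetP => z; rewrite !inE => /orP [/eqP ->//|/(subsetP sX)].
  by rewrite !inE => /andP[].
have sXD' X : X \subset D :\ x -> X \subset D.
  by move=> sX; apply: subset_trans sX (subsetDl _ _).
have caseA : (forall X, X \subset D :\ x -> k.+1 <= r1 X + r2 ((D :\ x) :\: X)) ->
    exists W : {set T}, [/\ W \subset D, k.+1 <= #|W|, r1 W = #|W| & r2 W = #|W|].
  move=> HA; have [W [sW kW h1 h2]] := IH r1 r2 k.+1 (D :\ x) hD' hr1 hr2 HA.
  by exists W; split => //; apply: subset_trans sW (subsetDl _ _).
have [l1|l1] := eqVneq (r1 [set x]) 0%N.
  apply: caseA => X sX; have := H (x |: X) (sXD X sX).
  by rewrite eD2; have := rankfun_loop X hr1 l1; lia.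
have [l2|l2] := eqVneq (r2 [set x]) 0%N.
  apply: caseA => X sX; have := H X (sXD' X sX).
  by rewrite (eD X sX); have := rankfun_loop ((D :\ x) :\: X) hr2 l2; lia.
have e1 : r1 [set x] = 1%N by have := rankfun_le1 x hr1; lia.
have e2 : r2 [set x] = 1%N by have := rankfun_le1 x hr2; lia.
have [HA|] := boolP [forall X : {set T}, (X \subset D :\ x) ==> (k.+1 <= r1 X + r2 ((D :\ x) :\: X))].
  by apply: caseA => X sX; move/forallP: HA => /(_ X); rewrite sX.
move/forallPn => [X]; rewrite negb_imply => /andP [sX hX].
have [HB|] := boolP [forall Y : {set T}, (Y \subset D :\ x) ==>
      (k <= contr r1 x Y + contr r2 x ((D :\ x) :\: Y))].
  have [W [sW kW h1 h2]] := IH (contr r1 x) (contr r2 x) k (D :\ x) hD'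
     (rankfun_contr hr1 e1) (rankfun_contr hr2 e2)
     (fun Y sY => implyP (forallP HB Y) sY).
  have xW : x \notin W by apply/negP => /(subsetP sW); rewrite !inE eqxx.
  exists (x |: W); rewrite cardsU1 xW; split.
  - apply/subsetP => z; rewrite !inE => /orP [/eqP ->//|/(subsetP sW)].
    by rewrite !inE => /andP[].
  - by [].
  - move: h1; rewrite /contr; have := rankfun_contr hr1 e1.
    have : 1 <= r1 (x |: W) by rewrite -e1; case: hr1 => _ rm _ _; apply: rm; rewrite sub1set setU11.
    lia.
  - move: h2; rewrite /contr.
    have : 1 <= r2 (x |: W) by rewrite -e2; case: hr2 => _ rm _ _; apply: rm; rewrite sub1set setU11.
    lia.
move/forallPn => [Y]; rewrite negb_imply => /andP [sY hY].
rewrite /contr -ltnNge in hY; rewrite -ltnNge in hX.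
case: hr1 => _ rm1 _ rs1; case: hr2 => _ rm2 _ rs2.
have s1 := rs1 X (x |: Y).
have s2 := rs2 ((D :\ x) :\: X) (x |: ((D :\ x) :\: Y)).
have xX : x \notin X by apply/negP => /(subsetP sX); rewrite !inE eqxx.
have eA : X :|: (x |: Y) = x |: (X :|: Y) by rewrite setUCA.
have eB : X :&: (x |: Y) = X :&: Y by bcase xD.
have eC : ((D :\ x) :\: X) :|: (x |: ((D :\ x) :\: Y)) = D :\: (X :&: Y) by bcase xD.
have eE : ((D :\ x) :\: X) :&: (x |: ((D :\ x) :\: Y)) = D :\: (x |: (X :|: Y)) by bcase xD.
rewrite eA eB in s1; rewrite eC eE in s2.
have h3 := H (X :&: Y) (subset_trans (subsetIl _ _) (sXD' X sX)).
have h4 := H (x |: (X :|: Y)) (sXD _ (subUset_XY sX sY)).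
have g1 : 1 <= r1 (x |: Y) by rewrite -e1; apply: rm1; rewrite sub1set setU11.
have g2 : 1 <= r2 (x |: ((D :\ x) :\: Y)) by rewrite -e2; apply: rm2; rewrite sub1set setU11.
lia.
Qed.

End Mat.

Local Open Scope ring_scope.

Section LA.
Variables (F : fieldType) (T : finType).
Local Notation N := #|{: T}|.
Implicit Types A B P Q R C X Y : {set T}.

Definition dmask (A : {set T}) : 'M[F]_N :=
  diag_mx (\row_i (if enum_val i \in A then 1 else 0)).

Lemma maskE A i j : dmask A i j = ((i == j) && (enum_val i \in A))%:R.
Proof.
rewrite /dmask !mxE; case: eqP => [->|] /=; last by rewrite mulr0n.
by case: (_ \in _); rewrite mulr1n.
Qed.

Lemma mask_mul A B : dmask A *m dmask B = dmask (A :&: B).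
Proof.
apply/matrixP => i j; rewrite /dmask mul_diag_mx !mxE inE.
case: eqP => [->|]; rewrite ?mulr0n ?mulr0 ?mulr1n //.
by case: (_ \in A); case: (_ \in B); rewrite ?mul1r ?mul0r.
Qed.

Lemma mask0 : dmask set0 = 0.
Proof. by apply/matrixP => i j; rewrite maskE inE andbF !mxE. Qed.

Lemma maskT : dmask setT = 1%:M.
Proof. by apply/matrixP => i j; rewrite maskE inE andbT !mxE. Qed.

Lemma mask_add_disj A B : [disjoint A & B] -> dmask (A :|: B) = dmask A + dmask B.
Proof.
move=> dAB; apply/matrixP => i j; rewrite [LHS]maskE [in RHS]mxE !maskE inE.
have := disjointFr dAB; move: dAB => _ H.
case: (i == j) => //=; last by rewrite addr0.
case hA: (enum_val i \in A) => /=; last by rewrite add0r.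
by rewrite (H _ hA) addr0.
Qed.

Lemma mask_idem A : dmask A *m dmask A = dmask A.
Proof. by rewrite mask_mul setIid. Qed.

Lemma mask_sub A B : A \subset B -> dmask A *m dmask B = dmask A.
Proof. by move=> sAB; rewrite mask_mul (setIidPl sAB). Qed.

Lemma mask_sub' A B : A \subset B -> dmask B *m dmask A = dmask A.
Proof. by move=> sAB; rewrite mask_mul (setIidPr sAB). Qed.

Lemma rank_adds_disj m1 m2 (A : 'M[F]_(m1, N)) (B : 'M[F]_(m2, N)) P Q :
  [disjoint P & Q] -> A *m dmask P = A -> B *m dmask Q = B ->
  \rank (A + B)%MS = (\rank A + \rank B)%N.
Proof.
move=> dPQ hA hB; apply: mxrank_disjoint_sum.
set Z := (A :&: B)%MS.
have [K1 hX] : exists K, Z = K *m A by apply/submxP; exact: capmxSl.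
have [K2 hY] : exists K, Z = K *m B by apply/submxP; exact: capmxSr.
have ZP : Z *m dmask P = Z by rewrite hX -mulmxA hA.
have ZQ : Z *m dmask Q = Z by rewrite hY -mulmxA hB.
rewrite -ZP -ZQ -mulmxA mask_mul.
have -> : Q :&: P = set0 by apply/setP => x; rewrite !inE; move: (disjointFr dPQ (x:=x)); case: (x \in Q); case: (x \in P) => //= ->.
by rewrite mask0 mulmx0.
Qed.


Lemma enum_val_eqE (i : 'I_N) (x : T) : (enum_val i == x) = (i == enum_rank x).
Proof.
apply/eqP/eqP => [<-|->]; first by rewrite enum_valK.
by rewrite enum_rankK.
Qed.

Lemma mask1 x : dmask [set x] = delta_mx (enum_rank x) (enum_rank x).
Proof.
apply/matrixP => i j; rewrite maskE !mxE inE enum_val_eqE.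
case: (altP (i =P enum_rank x)) => [->|ne] /=.
  by rewrite andbT eq_sym.
by rewrite andbF.
Qed.

Lemma rank_addmx_eq m (M1 M2 : 'M[F]_(m, N)) :
  (M1 <= (M1 + M2)%R)%MS -> (M2 <= (M1 + M2)%R)%MS ->
  \rank (M1 + M2)%R = \rank (M1 + M2)%MS.
Proof.
move=> h1 h2; apply/eqP; rewrite eqn_leq !mxrankS //.
  by rewrite addsmx_sub h1 h2.
exact: addmx_sub_adds (submx_refl _) (submx_refl _).
Qed.

Lemma rank_mask A : \rank (dmask A) = #|A|.
Proof.
have [k hA] : exists k, #|A| = k by eexists.
elim: k A hA => [|k IH] A hA.
  have A0 : A = set0 by apply/eqP; rewrite -cards_eq0 hA.
  by rewrite A0 mask0 mxrank0 cards0.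
have : (0 < #|A|)%N by rewrite hA.
case/card_gt0P => x xA.
have eA : A = [set x] :|: (A :\ x) by rewrite setD1K.
have dj : [disjoint [set x] & A :\ x].
  by rewrite disjoints1 !inE eqxx.
have hk : #|A :\ x| = k by move: hA; rewrite (cardsD1 x A) xA add1n => -[].
have s1 : [set x] \subset A by rewrite sub1set.
have s2 : A :\ x \subset A by apply: subD1set.
rewrite hA {1}eA mask_add_disj // rank_addmx_eq.
- by rewrite (rank_adds_disj dj) ?mask_idem // mask1 mxrank_delta IH // hk.
- by rewrite -(mask_add_disj dj) -eA -(mask_sub s1) submxMl.
- by rewrite -(mask_add_disj dj) -eA -(mask_sub s2) submxMl.
Qed.


Lemma subN_mx m1 m2 (A : 'M[F]_(m1, N)) (C : 'M[F]_(m2, N)) :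
  (A <= C)%MS -> (- A <= C)%MS.
Proof.
move=> h; have -> : - A = (- 1%:M) *m A by rewrite mulNmx mul1mx.
exact: submx_trans (submxMl _ _) h.
Qed.

Lemma mask_compl X : dmask X + dmask (~: X) = 1%:M.
Proof.
have dj : [disjoint X & ~: X] by rewrite disjoints_subset setCK subxx.
by rewrite -mask_add_disj // setUCr maskT.
Qed.

Lemma mask_subMS A B : A \subset B -> (dmask A <= dmask B)%MS.
Proof. by move=> sAB; rewrite -(mask_sub sAB) submxMl. Qed.

Lemma maskM_subMS m A B (M : 'M[F]_(N, m)) : A \subset B -> (dmask A *m M <= dmask B *m M)%MS.
Proof. by move=> sAB; rewrite -(mask_sub sAB) -mulmxA submxMl. Qed.

Lemma mask_union_subMS A B : (dmask (A :|: B) <= dmask A + dmask B)%MS.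
Proof.
have dj : [disjoint A & B :\: A].
  by rewrite disjoint_sym disjoints_subset subsetDr.
have -> : A :|: B = A :|: (B :\: A) by rewrite setDE setUIr setUCr setIT.
rewrite mask_add_disj //; apply: addmx_sub_adds => //.
by apply: mask_subMS; apply: subsetDl.
Qed.

Lemma maskM_union_subMS m A B (M : 'M[F]_(N, m)) :
  (dmask (A :|: B) *m M <= dmask A *m M + dmask B *m M)%MS.
Proof.
have dj : [disjoint A & B :\: A].
  by rewrite disjoint_sym disjoints_subset subsetDr.
have -> : A :|: B = A :|: (B :\: A) by rewrite setDE setUIr setUCr setIT.
rewrite mask_add_disj // mulmxDl; apply: addmx_sub_adds => //.
by apply: maskM_subMS; apply: subsetDl.
Qed.

Variable E : 'M[F]_N.

Definition emat R C := dmask R *m E *m dmask C.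
Definition srk R C := \rank (emat R C).

Lemma srk_tr R C : srk R C = \rank (dmask C *m E^T *m dmask R).
Proof. by rewrite /srk -mxrank_tr /emat !trmx_mul /dmask !tr_diag_mx mulmxA. Qed.

Definition Ssp X Y := (dmask (~: X) + dmask Y *m E^T)%MS.

Lemma rank_Ssp X Y : \rank (Ssp X Y) = (#|~: X| + srk X Y)%N.
Proof.
set B := dmask Y *m E^T.
have eB : B = B *m dmask X + B *m dmask (~: X) by rewrite -mulmxDr mask_compl mulmx1.
have e : \rank (Ssp X Y) = \rank (dmask (~: X) + B *m dmask X)%MS.
  apply: eqmx_rank; apply/andP; split.
    rewrite addsmx_sub addsmxSl /=.
    rewrite [X in (X <= _)%MS]eB; apply: addmx_sub; first exact: addsmxSr.
    exact: submx_trans (submxMl _ _) (addsmxSl _ _).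
  rewrite addsmx_sub addsmxSl /=.
  have -> : B *m dmask X = B - B *m dmask (~: X) by rewrite {2}eB addrK.
  apply: addmx_sub; first exact: addsmxSr.
  apply: subN_mx; exact: submx_trans (submxMl _ _) (addsmxSl _ _).
have dj : [disjoint ~: X & X] by rewrite disjoints_subset subxx.
rewrite e (rank_adds_disj dj) ?mask_idem // ?rank_mask ?srk_tr //.
by rewrite -mulmxA mask_idem.
Qed.

Lemma oum R1 R2 C1 C2 :
  (srk (R1 :&: R2) (C1 :|: C2) + srk (R1 :|: R2) (C1 :&: C2) <=
   srk R1 C1 + srk R2 C2)%N.
Proof.
have h1 : (Ssp (R1 :&: R2) (C1 :|: C2) <= Ssp R1 C1 + Ssp R2 C2)%MS.
  rewrite /Ssp addsmx_sub; apply/andP; split.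
    rewrite setCI; apply: submx_trans (mask_union_subMS _ _) _.
    by apply: addsmxS; apply: addsmxSl.
  apply: submx_trans (maskM_union_subMS _ _ _) _.
  by apply: addsmxS; apply: addsmxSr.
have h2 : (Ssp (R1 :|: R2) (C1 :&: C2) <= Ssp R1 C1 :&: Ssp R2 C2)%MS.
  rewrite sub_capmx /Ssp; apply/andP; split; apply: addsmxS.
  - by apply: mask_subMS; rewrite setCS subsetUl.
  - by apply: maskM_subMS; apply: subsetIl.
  - by apply: mask_subMS; rewrite setCS subsetUr.
  - by apply: maskM_subMS; apply: subsetIr.
have := leq_add (mxrankS h1) (mxrankS h2).
rewrite mxrank_sum_cap !rank_Ssp.
have : (#|~: (R1 :&: R2)| + #|~: (R1 :|: R2)| = #|~: R1| + #|~: R2|)%N.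
  by rewrite setCI setCU cardsUI.
lia.
Qed.


Lemma srk_monoC R C C' : C \subset C' -> (srk R C <= srk R C')%N.
Proof.
move=> s; rewrite /srk /emat -(mask_sub' s) mulmxA; exact: mxrankM_maxl.
Qed.

Lemma srk_monoR R R' C : R \subset R' -> (srk R C <= srk R' C)%N.
Proof.
move=> s; rewrite /srk /emat -(mask_sub s) -!mulmxA; exact: mxrankM_maxr.
Qed.

Lemma srk_set0 R : srk R set0 = 0%N.
Proof. by rewrite /srk /emat mask0 mulmx0 mxrank0. Qed.

Lemma srk_le_cardC R C : (srk R C <= #|C|)%N.
Proof. by rewrite /srk /emat -(rank_mask C); exact: mxrankM_maxr. Qed.

Lemma srk_le_cardR R C : (srk R C <= #|R|)%N.
Proof. by rewrite /srk /emat -(rank_mask R) -mulmxA; exact: mxrankM_maxl. Qed.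

Lemma srk_unit R C x : (srk R (x |: C) <= (srk R C).+1)%N.
Proof.
have dj : [disjoint C & [set x] :\: C].
  by rewrite disjoint_sym disjoints_subset subsetDr.
have -> : x |: C = C :|: ([set x] :\: C).
  by apply/setP => z; rewrite !inE; case: (z == x); case: (z \in C).
rewrite /srk /emat mask_add_disj // mulmxDr.
apply: leq_trans (mxrank_add _ _) _; rewrite -addn1 leq_add2l.
apply: leq_trans (mxrankM_maxr _ _) _; rewrite rank_mask.
by apply: leq_trans (subset_leq_card (subsetDl _ _)) _; rewrite cards1.
Qed.

Lemma srk_submodC R C1 C2 :
  (srk R (C1 :|: C2) + srk R (C1 :&: C2) <= srk R C1 + srk R C2)%N.
Proof. by have := oum R R C1 C2; rewrite setIid setUid. Qed.

End LA.
Arguments dmask {F T} A.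

Lemma rows_sub (F : fieldType) m1 m2 n (A : 'M[F]_(m1, n)) (B : 'M[F]_(m2, n)) :
  (forall i, row i A = 0 \/ exists j, row i A = row j B) -> (A <= B)%MS.
Proof.
move=> h; apply/row_subP => i; case: (h i) => [->|[j ->]]; first exact: sub0mx.
exact: row_sub.
Qed.

Section BigMin.
Variables (I : finType) (P : pred I) (G : I -> nat) (x0 : nat).

Lemma bigmin_le i : P i -> (\big[minn/x0]_(j | P j) G j <= G i)%N.
Proof.
move=> Pi; have : i \in index_enum I by rewrite mem_index_enum.
elim: (index_enum I) => [|a s IHs] //; rewrite big_cons inE => /orP [/eqP <-|h].
  by rewrite Pi geq_minl.
by case: (P a); [apply: leq_trans (geq_minr _ _) _|]; apply: IHs.
Qed.

Lemma bigmin_ge k : (forall i, P i -> k <= G i)%N -> (k <= x0)%N ->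
  (k <= \big[minn/x0]_(j | P j) G j)%N.
Proof.
move=> h hx; elim/big_ind: _ => //; first by move=> a b ha hb; rewrite leq_min ha hb.
Qed.

Lemma bigmin_attained i0 : P i0 -> (G i0 <= x0)%N ->
  exists i, P i /\ \big[minn/x0]_(j | P j) G j = G i.
Proof.
move=> Pi0 hx.
have : \big[minn/x0]_(j | P j) G j = x0 \/ exists i, P i /\ \big[minn/x0]_(j | P j) G j = G i.
  elim/big_ind: _; [by left| |by move=> i Pi; right; exists i].
  move=> a b ha hb; case: (leqP a b) => ab.
    by [].
  by [].
case=> [e|//]; exists i0; split => //; apply/eqP; rewrite eqn_leq bigmin_le //= e //.
Qed.
End BigMin.

Ltac bb := repeat match goal with |- context [?a \in ?B] => case: (a \in B) end.

Section Net.
Variables (F : finFieldType) (V : finType) (n : nat) (layer : V -> nat)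
  (edge : V * 'I_n -> V * 'I_n -> bool) (S : V) (l : nat).

Local Notation Pt := (V * 'I_n)%type.
Local Notation N := #|{: Pt}|.
Implicit Types (Om : {set V}) (X Y : {set V * 'I_n}).

Definition Emain : 'M[F]_N :=
  \matrix_(i, j) (if edge (enum_val j) (enum_val i) then 1 else 0).

Lemma ematE (R C : {set Pt}) i j : emat Emain R C i j =
  if [&& enum_val i \in R, enum_val j \in C & edge (enum_val j) (enum_val i)] then 1 else 0.
Proof.
rewrite /emat /dmask mul_mx_diag mul_diag_mx !mxE.
by case: (_ \in R); case: (_ \in C); case: edge; rewrite ?mulr1 ?mul1r ?mulr0 ?mul0r.
Qed.

Definition Rr (Om : {set V}) := [set q : Pt | (layer q.1 <= l)%N && (q.1 \notin Om)].
Definition Cr (Om : {set V}) := [set p : Pt | p.1 \in Om].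
Definition rho Om := srk Emain (Rr Om) (Cr Om).

Definition cN (X : {set Pt}) : nat :=
  \big[minn/#|X|]_(Om : {set V} | S \in Om) (rho Om + #|X :&: Cr Om|)%N.

Lemma rho_setT : rho setT = 0%N.
Proof.
apply/eqP; rewrite -leqn0; apply: leq_trans (srk_le_cardR _ _ _) _.
rewrite leqn0 cards_eq0; apply/eqP/setP => q; rewrite !inE; by rewrite andbF.
Qed.

Lemma rho_submod Om1 Om2 :
  (rho (Om1 :|: Om2) + rho (Om1 :&: Om2) <= rho Om1 + rho Om2)%N.
Proof.
have e1 : Rr (Om1 :|: Om2) = Rr Om1 :&: Rr Om2.
  by apply/setP => q; rewrite !inE negb_or; case: (_ <= _)%N.
have e2 : Rr (Om1 :&: Om2) = Rr Om1 :|: Rr Om2.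
  by apply/setP => q; rewrite !inE negb_and; case: (_ <= _)%N.
have e3 : Cr (Om1 :|: Om2) = Cr Om1 :|: Cr Om2 by apply/setP => q; rewrite !inE.
have e4 : Cr (Om1 :&: Om2) = Cr Om1 :&: Cr Om2 by apply/setP => q; rewrite !inE.
by rewrite /rho e1 e2 e3 e4; apply: oum.
Qed.

Lemma cN_attained X : exists Om, S \in Om /\ cN X = (rho Om + #|X :&: Cr Om|)%N.
Proof.
rewrite /cN; apply: (bigmin_attained (P := fun Om : {set V} => S \in Om)) (in_setT S) _.
by rewrite rho_setT add0n subset_leq_card // subsetIl.
Qed.

Lemma cN_le X Om : S \in Om -> (cN X <= rho Om + #|X :&: Cr Om|)%N.
Proof. by move=> h; rewrite /cN; apply: (bigmin_le (P := fun Om : {set V} => S \in Om)). Qed.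

Lemma rankfun_cN : rankfun cN.
Proof.
split.
- apply/eqP; rewrite -leqn0; apply: leq_trans (cN_le _ (in_setT S)) _.
  by rewrite rho_setT set0I cards0.
- move=> X Y sXY; have [Om [hS ->]] := cN_attained Y.
  apply: leq_trans (cN_le X hS) _; rewrite leq_add2l subset_leq_card //.
  exact: setSI.
- move=> X x; have [Om [hS ->]] := cN_attained X.
  apply: leq_trans (cN_le (x |: X) hS) _; rewrite -addnS leq_add2l.
  rewrite setIUl; apply: leq_trans (leq_card_setU _ _) _.
  rewrite -addn1 addnC leq_add2l; apply: leq_trans (subset_leq_card (subsetIl _ _)) _.
  by rewrite cards1.
- move=> X Y; have [O1 [h1 ->]] := cN_attained X; have [O2 [h2 ->]] := cN_attained Y.
  have hU : S \in O1 :|: O2 by rewrite inE h1.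
  have hI : S \in O1 :&: O2 by rewrite inE h1 h2.
  have c1 := cN_le (X :|: Y) hI; have c2 := cN_le (X :&: Y) hU.
  have sm := rho_submod O1 O2.
  have e4 : Cr (O1 :&: O2) = Cr O1 :&: Cr O2 by apply/setP => q; rewrite !inE.
  have e3 : Cr (O1 :|: O2) = Cr O1 :|: Cr O2 by apply/setP => q; rewrite !inE.
  rewrite e3 e4 in c1 c2.
  set A := X :&: Cr O1; set B := Y :&: Cr O2.
  set U := (X :|: Y) :&: (Cr O1 :&: Cr O2); set I := (X :&: Y) :&: (Cr O1 :|: Cr O2).
  have sUI : U :|: I \subset A :|: B.
    apply/subsetP => z; rewrite !inE.
    by repeat match goal with |- context [?a \in ?B] => case: (a \in B) end.
  have sIU : U :&: I \subset A :&: B.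
    apply/subsetP => z; rewrite !inE.
    by repeat match goal with |- context [?a \in ?B] => case: (a \in B) end.
  have k1 := cardsUI U I; have k2 := cardsUI A B.
  have k3 := subset_leq_card sUI; have k4 := subset_leq_card sIU.
  rewrite -/U in c1; rewrite -/I in c2; lia.
Qed.


Variable W' : {set port V n}.
Hypothesis HW'in : forall w, w \in W' -> is_in w /\ layer (port_owner w) = l.+1.
Hypothesis Hedge : forall p q, edge p q -> layer q.1 = (layer p.1).+1.

Definition Wq := [set q : Pt | inr q \in W'].
Definition rM X := srk Emain Wq X.

Lemma rankfun_rM : rankfun rM.
Proof.
split.
- exact: srk_set0.
- by move=> X Y; apply: srk_monoC.
- by move=> X x; apply: srk_unit.
- by move=> X Y; apply: srk_submodC.
Qed.

Lemma card_Wq : #|Wq| = #|W'|.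
Proof.
have -> : W' = inr @: Wq.
  apply/setP => w; apply/idP/imsetP => [hw|[q]]; last by rewrite inE => h ->.
  have [] := HW'in hw; case: w hw => // q hw _ _; exists q => //; by rewrite inE.
by rewrite card_imset //; move=> a b [].
Qed.

Definition Wnode (v : V) := [exists j : 'I_n, inr (v, j) \in W'].

Lemma Wnode_layer v : Wnode v -> layer v = l.+1.
Proof. by case/existsP => j /HW'in [_]. Qed.


Lemma disc_Wnode q : disconnected W' q = Wnode q.1 && (inr q \notin W').
Proof. by []. Qed.

Lemma rows_sub2 (m1 m2 m3 k : nat) (A : 'M[F]_(m1, k)) (B : 'M[F]_(m2, k)) (C : 'M[F]_(m3, k)) :
  (forall i, row i A = 0 \/ (exists j, row i A = row j B) \/ (exists j, row i A = row j C)) ->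
  (A <= B + C)%MS.
Proof.
move=> h; apply/row_subP => i; case: (h i) => [->|[[j ->]|[j ->]]]; first exact: sub0mx.
  exact: submx_trans (row_sub _ _) (addsmxSl _ _).
exact: submx_trans (row_sub _ _) (addsmxSr _ _).
Qed.

Lemma rowEntry (m k : nat) (A : 'M[F]_(m, k)) i j : row i A 0 j = A i j.
Proof. by rewrite mxE. Qed.

Definition Xo Om := [set p : Pt | (layer p.1 == l) && (p.1 \in Om)].

Lemma cutE (Vt Po Pi : finType) (oo : Po -> Vt) (oi : Pi -> Vt) (e : Po -> Pi -> bool)
  (Om : {set Vt}) i j :
  cut_matrix F oo oi e Om i j =
  if [&& oo (enum_val j) \in Om, oi (enum_val i) \notin Om & e (enum_val j) (enum_val i)]
  then 1 else 0.
Proof. by rewrite mxE. Qed.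

Lemma regW'_bound Om : S \in Om -> layer S = 1%N -> (1 <= l)%N ->
  (sink_mincut F edge W' S <= rho Om + rM (Xo Om))%N.
Proof.
move=> hS lS hl.
pose Om2 : {set option V} := [set o | if o is Some v then
   (if (layer v <= l)%N then v \in Om else ~~ Wnode v) else false].
have h2 : (Some S \in Om2) && (None \notin Om2) by rewrite !inE lS hl hS.
rewrite /sink_mincut /mincut.
apply: leq_trans (bigmin_le (P := fun O : {set option V} => (Some S \in O) && (None \notin O)) _ _ h2) _.
rewrite /cut_rank /rho /rM.
apply: leq_trans (mxrankS (rows_sub2 (B := emat Emain (Rr Om) (Cr Om)) (C := emat Emain Wq (Xo Om)) _)) _; last first.
  by rewrite -mxrank_sum_cap leq_addr.
move=> i; case e: (enum_val i) => [q|[w hw]].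
- case: (leqP (layer q.1) l) => hq.
  + right; left; exists (enum_rank q); apply/rowP => j; rewrite !rowEntry cutE ematE e enum_rankK.
    rewrite /aug_owner_out /aug_owner_in /aug_edge disc_Wnode !inE /= hq.
    case he: (edge _ q); rewrite ?andbF //.
    have lp := Hedge he.
    have -> : (layer (enum_val j).1 <= l)%N by rewrite lp in hq; exact: ltnW hq.
    have -> : Wnode q.1 = false.
      by apply/negbTE/negP => /Wnode_layer lq; rewrite lq ltnn in hq.
    by rewrite /=; bb.
  + case hW: (Wnode q.1); last first.
      left; apply/rowP => j; rewrite rowEntry cutE ?mxE e /aug_owner_in !inE /=.
      by rewrite (leqNgt (layer q.1)) hq /= hW /= andbF.
    have lq := Wnode_layer hW.
    case hin: (inr q \in W'); last first.
      left; apply/rowP => j; rewrite rowEntry cutE ?mxE e /aug_edge disc_Wnode hW hin /=.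
      by rewrite !andbF.
    right; right; exists (enum_rank q); apply/rowP => j; rewrite !rowEntry cutE ematE e enum_rankK.
    rewrite /aug_owner_out /aug_owner_in /aug_edge disc_Wnode !inE /= hin hW /= (leqNgt (layer q.1)) hq /=.
    case he: (edge _ q); rewrite ?andbF //.
    have lp := Hedge he.
    have e1 : layer (enum_val j).1 = l by apply/eqP; rewrite -eqSS -lp lq.
    rewrite e1 leqnn eqxx.
    by rewrite /=; bb.
- left; apply/rowP => j; rewrite rowEntry cutE ?mxE e /aug_owner_out /aug_owner_in /aug_edge /=.
  have [isin lw] := HW'in hw.
  move: e isin lw; case: w hw => // q' hw e _ /= lq'.
  case h: ((enum_val j).1 == q'.1); rewrite ?andbF //.
  move/eqP: h => h.
  have hW : Wnode q'.1 by apply/existsP; exists q'.2; rewrite -surjective_pairing.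
  rewrite !inE h /= lq' ltnn hW /=.
  by [].
Qed.


Definition Ol := [set p : Pt | layer p.1 == l].
Definition Lt := [set p : Pt | (layer p.1 < l)%N].

Variable Wp : {set Pt}.
Hypothesis HWp : Wp \subset Ol.
Local Notation W := (inl @: Wp : {set port V n}).

Lemma inr_notin_W x : (inr x \in W) = false.
Proof. by apply/negbTE/imsetP => -[y _]. Qed.

Lemma disc_W q : disconnected W q = false.
Proof. by rewrite /disconnected; case: existsP => // -[j]; rewrite inr_notin_W. Qed.

Lemma natr_if (b : bool) : (b%:R : F) = if b then 1 else 0.
Proof. by case: b. Qed.

Lemma emat_Lt Om : emat Emain (Rr Om) (Cr Om) *m dmask Lt = emat Emain (Rr Om) (Cr Om).
Proof.
apply/matrixP => i j; rewrite {1}/dmask mul_mx_diag mxE !ematE mxE !inE.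
case he: edge; rewrite ?andbF ?mul0r //.
have lp := Hedge he.
case hq: (layer (enum_val i).1 <= l)%N; rewrite /= ?mul0r //.
have -> : (layer (enum_val j).1 < l)%N by rewrite -ltnS -lp ltnS.
by rewrite mulr1.
Qed.

Lemma cutW_lower (Om : {set option V}) : None \notin Om ->
  (rho [set v | Some v \in Om] + #|Wp :&: Cr [set v | Some v \in Om]| <=
   cut_rank F (@aug_owner_out V n) (@aug_owner_in V n W) (@aug_edge V n edge W) Om)%N.
Proof.
move=> hN; set Om0 := [set v | Some v \in Om]; set Z := Wp :&: Cr Om0.
have dj : [disjoint Lt & Ol].
  rewrite disjoints_subset; apply/subsetP => p; rewrite !inE => h.
  by apply/negP => /eqP e; rewrite e ltnn in h.
have sZ : Z \subset Ol by apply: subset_trans (subsetIl _ _) HWp.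
rewrite -(rank_mask F Z) /rho /srk -(rank_adds_disj dj (emat_Lt Om0) (mask_sub F sZ)).
rewrite /cut_rank; apply: mxrankS; rewrite addsmx_sub; apply/andP; split.
- apply: rows_sub => k; case hq: (enum_val k \in Rr Om0); last first.
    by left; apply/rowP => j; rewrite rowEntry ematE hq ?mxE.
  right; exists (enum_rank (inl (enum_val k) : aug_in W)).
  apply/rowP => j; rewrite !rowEntry ematE cutE enum_rankK hq.
  rewrite /aug_owner_out /aug_owner_in /aug_edge disc_W !inE /=.
  move: hq; rewrite !inE => /andP [_ ->]; by rewrite andbT.
- apply: rows_sub => k; case hp: (enum_val k \in Z); last first.
    by left; apply/rowP => j; rewrite rowEntry maskE hp andbF ?mxE.
  have hW : inl (enum_val k) \in W by apply/imsetP; exists (enum_val k) => //; move: hp; rewrite inE => /andP[].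
  right; exists (enum_rank (inr (exist _ (inl (enum_val k)) hW) : aug_in W)).
  apply/rowP => j; rewrite !rowEntry maskE cutE enum_rankK hp natr_if andbT.
  rewrite /aug_owner_out /aug_owner_in /aug_edge /= hN (inj_eq enum_val_inj) eq_sym.
  case: (eqVneq k j) => [<-|]; last by rewrite !andbF.
  by move: hp; rewrite !inE => /andP [_ ->].
Qed.

Lemma cutW_upper :
  (sink_mincut F edge W S <= #|Wp|)%N.
Proof.
pose Oa : {set option V} := [set o | o != None].
have h2 : (Some S \in Oa) && (None \notin Oa) by rewrite !inE.
rewrite /sink_mincut /mincut.
apply: leq_trans (bigmin_le (P := fun O : {set option V} => (Some S \in O) && (None \notin O)) _ _ h2) _.
rewrite /cut_rank -(rank_mask F Wp); apply: mxrankS; apply: rows_sub => i.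
case e: (enum_val i) => [q|[w hw]].
  by left; apply/rowP => j; rewrite rowEntry cutE ?mxE e /aug_owner_in !inE.
have [p0 hp0 ew] := imsetP hw.
right; exists (enum_rank p0); apply/rowP => j; rewrite !rowEntry cutE maskE e enum_rankK hp0.
rewrite natr_if /aug_owner_out /aug_owner_in /aug_edge !inE /= ew andbT.
by rewrite -(inj_eq enum_val_inj) enum_rankK eq_sym.
Qed.


Lemma GWW_lower : (rM Wp <= \rank (GWW F edge W W'))%N.
Proof.
pose Y1 : 'M[F]_(#|W'|, N) := \matrix_(a, j)
  (if (enum_val j \in Wp) && pedge edge (inl (enum_val j)) (enum_val a) then 1 else 0).
have s1 : (emat Emain Wq Wp <= Y1)%MS.
  apply: rows_sub => k; case hq: (enum_val k \in Wq); last first.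
    by left; apply/rowP => j; rewrite rowEntry ematE hq ?mxE.
  have hq' : inr (enum_val k) \in W' by move: hq; rewrite inE.
  right; exists (enum_rank_in hq' (inr (enum_val k))).
  apply/rowP => j; rewrite !rowEntry ematE mxE enum_rankK_in // hq /=.
  by case: (_ \in Wp).
have s2 : (Y1^T <= (GWW F edge W W')^T)%MS.
  apply: rows_sub => j; case hp: (enum_val j \in Wp); last first.
    by left; apply/rowP => a; rewrite rowEntry !mxE hp.
  have hW : inl (enum_val j) \in W by apply/imsetP; exists (enum_val j).
  right; exists (enum_rank_in hW (inl (enum_val j))).
  apply/rowP => a; rewrite !rowEntry !mxE enum_rankK_in // hp.
  by [].
rewrite /rM /srk; apply: leq_trans (mxrankS s1) _.
by rewrite -mxrank_tr -[X in (_ <= X)%N]mxrank_tr mxrankS.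
Qed.

End Net.

Local Close Scope ring_scope.

Theorem lemma5 (F : finFieldType) (V : finType) (n : nat)
  (layer : V -> nat) (lam : nat)
  (edge : V * 'I_n -> V * 'I_n -> bool) (S : V) (Tset : {set V})
  (Hlayers : forall v : V, (1 <= layer v <= lam)%N)
  (Hedge : forall p q, edge p q -> layer q.1 = (layer p.1).+1)
  (HS : layer S = 1%N)
  (HT0 : Tset != set0) (HST : S \notin Tset)
  (l : nat) (Hl : (1 <= l <= lam - 1)%N)
  (W' : {set port V n})
  (HW'in : forall w, w \in W' -> is_in w /\ layer (port_owner w) = l.+1)
  (HW'reg : regular F layer edge S (net_R F edge S Tset) W') :
  exists W : {set port V n},
    [/\ forall w, w \in W -> is_out w /\ layer (port_owner w) = l,
        regular F layer edge S (net_R F edge S Tset) W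
      & \rank (GWW F edge W W') = net_R F edge S Tset].
Proof.
set R := net_R F edge S Tset in HW'reg *.
case: HW'reg => [[cW' _ _] regW'].
have hl1 : (1 <= l)%N by case/andP: Hl.
pose Olx := Ol n layer l.
have H : forall X : {set V * 'I_n}, X \subset Olx ->
    (R <= cN F layer edge S l X + rM F edge W' (Olx :\: X))%N.
  move=> X sX; have [Om [hS ->]] := cN_attained F layer edge S l X.
  have b := regW'_bound F HW'in Hedge hS HS hl1; rewrite regW' in b.
  have eX : Xo n layer l Om \subset (X :&: Cr n Om) :|: (Olx :\: X).
    apply/subsetP => p; rewrite !inE => /andP [h1 h2].
    by rewrite h1 h2 /=; case: (p \in X).
  case: (rankfun_rM F edge W') => _ rMm _ rMs.
  have m1 := rMm _ _ eX.
  have m2 := rMs (X :&: Cr n Om) (Olx :\: X).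
  have m3 : (rM F edge W' (X :&: Cr n Om) <= #|X :&: Cr n Om|)%N by apply: srk_le_cardC.
  lia.
have [Wp [sWp kW h1 h2]] := edmonds (rankfun_cN F layer edge S l) (rankfun_rM F edge W') H.
have rMle : (rM F edge W' Wp <= R)%N.
  by rewrite -cW' -(card_Wq HW'in); apply: srk_le_cardR.
have cWp : #|Wp| = R by lia.
have cW : #|(inl @: Wp : {set port V n})| = R by rewrite card_imset // => a b [].
exists (inl @: Wp); split.
- move=> w /imsetP [p hp ->]; split => //=.
  by move: (subsetP sWp p hp); rewrite inE => /eqP.
- split.
    split => //.
      exists l => w /imsetP [p hp ->] /=.
      by move: (subsetP sWp p hp); rewrite inE => /eqP.
    by move=> v [_ [j /imsetP [p _]]].
  apply/eqP; rewrite eqn_leq; apply/andP; split.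
    by rewrite -cWp; apply: cutW_upper.
  rewrite /sink_mincut /mincut; apply: bigmin_ge.
    move=> Om /andP [hS hN].
    apply: leq_trans _ (cutW_lower F Hedge sWp hN).
    rewrite -cWp -[X in (X <= _)%N]h1; apply: cN_le; by rewrite inE.
  by rewrite card_sum card_sig cW leq_addl.
- apply/eqP; rewrite eqn_leq; apply/andP; split.
    by rewrite -cW'; apply: rank_leq_row.
  by rewrite -cWp -[X in (X <= _)%N]h2; apply: GWW_lower.
Qed.
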